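(* Let $(\mu_{+},\sigma_{+})\in\mathbb{K}[[\mathtt{x}]]^{+}\times\mathfrak{M}^{+}$ and define $\phi_{(\mu_{+},\sigma_{+})}:\mathbb{K}[[\mathtt{x}]]\to\mathbb{K}[[\mathtt{x}]]\times\mathfrak{M}$ by $\phi_{(\mu_{+},\sigma_{+})}(f):=\sum_{n\ge0}f_n(\mu_{+},\sigma_{+})^{\rtimes n}$ for $f=\sum_{n\ge0}f_n\mathtt{x}^n$ (the series converges). Then $\phi_{(\mu_{+},\sigma_{+})}$ is $\mathbb{K}$-linear and maps $\mathtt{x}$ to $(\mu_{+},\sigma_{+})$. Moreover, if $f\in\mathfrak{M}$ then $\phi_{(\mu_{+},\sigma_{+})}(f)\in\mathbb{K}[[\mathtt{x}]]^{+}\times\mathfrak{M}^{+}$, and if $\langle f,1\rangle=1$ then $\phi_{(\mu_{+},\sigma_{+})}(f)\in\mathsf{UM}\rtimes\mathsf{US}$.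
   Context: $\mathbb{K}$ is a field of characteristic zero (discrete topology); $\mathbb{K}[[\mathtt{x}]]$ has the $(\mathtt{x})$-adic topology given by the order valuation $\nu$ ($\nu(0)=+\infty$); $\langle f,1\rangle$ is the constant term of $f$. $\mathfrak{M}:=\mathtt{x}\mathbb{K}[[\mathtt{x}]]$; $\mathbb{K}[[\mathtt{x}]]\times\mathfrak{M}$ has the product topology and componentwise vector space structure. $\mathbb{K}[[\mathtt{x}]]^{+}:=\mathfrak{M}$, $\mathfrak{M}^{+}:=\{\sigma\in\mathfrak{M}:\nu(\sigma)>1\}$. For $g=\sum g_n\mathtt{x}^n$ and $\sigma\in\mathfrak{M}$, $g\circ\sigma:=\sum g_n\sigma^n$. Product: $(\mu_1,\sigma_1)\rtimes(\mu_2,\sigma_2):=((\mu_1\circ\sigma_2)\mu_2,\sigma_1\circ\sigma_2)$; $(\mu,\sigma)^{\rtimes0}:=(1,\mathtt{x})$, $(\mu,\sigma)^{\rtimes n}$ the $n$-fold product. $\mathsf{UM}:=\{1+\mu_{+}:\mu_{+}\in\mathbb{K}[[\mathtt{x}]]^{+}\}$, $\mathsf{US}:=\{\mathtt{x}+\sigma_{+}:\sigma_{+}\in\mathfrak{M}^{+}\}$, and $\mathsf{UM}\rtimes\mathsf{US}$ (the Riordan group) is the set of pairs $(\mu,\sigma)$ with $\mu\in\mathsf{UM}$, $\sigma\in\mathsf{US}$. *)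

(* Defs.v *)
From mathcomp Require Import all_boot all_order all_algebra.
Set Implicit Arguments. Unset Strict Implicit. Unset Printing Implicit Defensive.
Import GRing.Theory.
Local Open Scope ring_scope.

Section FPS.
Variable K : fieldType.

(* A formal power series f = sum_n f n x^n. *)
Definition fps := nat -> K.

Definition fps0 : fps := fun _ => 0.
Definition fps1 : fps := fun n => if n == 0%N then 1 else 0.
Definition fpsX : fps := fun n => if n == 1%N then 1 else 0.
Definition fps_add (f g : fps) : fps := fun n => f n + g n.
Definition fps_opp (f : fps) : fps := fun n => - f n.
Definition fps_scale (c : K) (f : fps) : fps := fun n => c * f n.
Definition fps_mul (f g : fps) : fps :=
  fun n => \sum_(i < n.+1) f i * g (n - i)%N.
Definition fps_exp (f : fps) (k : nat) : fps := iter k (fps_mul f) fps1.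

Definition const_term (f : fps) : K := f 0%N.

(* ord_ge f n  <->  nu(f) >= n  (nu(0) = +oo, so 0 satisfies it for all n) *)
Definition ord_ge (f : fps) (n : nat) : Prop := forall k, (k < n)%N -> f k = 0.

(* M = x K[[x]] = K[[x]]^+ ;  M^+ = {s in M | nu(s) > 1} *)
Definition inM (f : fps) : Prop := ord_ge f 1.
Definition inMplus (s : fps) : Prop := inM s /\ ord_ge s 2.

(* g o s := sum_n g_n s^n, for s in M. Since nu(s^n) >= n, the coefficient of
   x^k of this (x-adically convergent) series is the finite sum below. *)
Definition fps_comp (g s : fps) : fps :=
  fun k => \sum_(n < k.+1) g n * fps_exp s n k.

Definition fps_cvg (u : nat -> fps) (l : fps) : Prop :=
  forall n, exists N0, forall N, (N0 <= N)%N ->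
    ord_ge (fps_add l (fps_opp (u N))) n.

Definition pair_t := (fps * fps)%type.
Definition pair_add (p q : pair_t) : pair_t := (fps_add p.1 q.1, fps_add p.2 q.2).
Definition pair_scale (c : K) (p : pair_t) : pair_t :=
  (fps_scale c p.1, fps_scale c p.2).
Definition pair_zero : pair_t := (fps0, fps0).
Definition pair_cvg (u : nat -> pair_t) (l : pair_t) : Prop :=
  fps_cvg (fun N => (u N).1) l.1 /\ fps_cvg (fun N => (u N).2) l.2.

Definition rtimes (p q : pair_t) : pair_t :=
  (fps_mul (fps_comp p.1 q.2) q.1, fps_comp p.2 q.2).
Definition rpow (p : pair_t) (n : nat) : pair_t :=
  iter n (fun q => rtimes q p) (fps1, fpsX).

Definition phi_partial (p : pair_t) (f : fps) (N : nat) : pair_t :=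
  \big[pair_add/pair_zero]_(n < N) pair_scale (f n) (rpow p n).

Definition inUM (mu : fps) : Prop := exists mup, inM mup /\ mu = fps_add fps1 mup.
Definition inUS (s : fps) : Prop := exists sp, inMplus sp /\ s = fps_add fpsX sp.
Definition inRiordan (p : pair_t) : Prop := inUM p.1 /\ inUS p.2.

End FPS.

(* Main.v *)
Require Import Defs.
From mathcomp Require Import all_boot all_order all_algebra.
From Stdlib Require Import FunctionalExtensionality.
Local Open Scope ring_scope.
Import GRing.Theory.

Lemma ord_ge_le (K : fieldType) (f : fps K) a b : ord_ge f a -> (b <= a)%N -> ord_ge f b.
Proof. move=> H hb k hk; apply: H; exact: leq_trans hk hb. Qed.

Lemma ord_mul (K : fieldType) (f g : fps K) a b :
  ord_ge f a -> ord_ge g b -> ord_ge (fps_mul f g) (a + b).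
Proof.
move=> Hf Hg k hk; rewrite /fps_mul big1 // => i _.
case: (ltnP i a) => hi; first by rewrite Hf // mul0r.
rewrite Hg ?mulr0 //.
have := ltn_ord i; rewrite ltnS => hik.
rewrite ltn_subLR //; exact: leq_trans hk (leq_add hi (leqnn b)).
Qed.

Lemma ord_exp (K : fieldType) (s : fps K) b n :
  ord_ge s b -> ord_ge (fps_exp s n) (n * b).
Proof.
move=> Hs; elim: n => [|n IH]; first by move=> k.
rewrite mulSn /fps_exp iterS; exact: ord_mul.
Qed.

Lemma ord_comp (K : fieldType) (g s : fps K) a b :
  ord_ge g a -> ord_ge s b -> ord_ge (fps_comp g s) (a * b).
Proof.
move=> Hg Hs k hk; rewrite /fps_comp big1 // => n _.
case: (ltnP n a) => hn; first by rewrite Hg // mul0r.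
rewrite (@ord_exp _ s b n Hs) ?mulr0 //; exact: leq_trans hk (leq_mul hn (leqnn b)).
Qed.

Lemma rpowS (K : fieldType) (p : pair_t K) n : rpow p n.+1 = rtimes (rpow p n) p.
Proof. by []. Qed.

Lemma ord_rpow (K : fieldType) (mup sp : fps K) (Hmu : inM mup) (Hs : inMplus sp) n :
  ord_ge (rpow (mup, sp) n).1 n /\ ord_ge (rpow (mup, sp) n).2 n.+1.
Proof.
elim: n => [|n [IH1 IH2]].
  split; first by move=> k.
  by move=> [|k] //= _; rewrite /fpsX.
rewrite rpowS /rtimes /=; split.
  apply: (@ord_ge_le _ _ (n * 2 + 1)); last by rewrite addn1 ltnS -{1}(muln1 n) leq_mul2l orbT.
  apply: ord_mul => //; apply: ord_comp => //; exact: Hs.2.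
apply: (@ord_ge_le _ _ (n.+1 * 2)); last by rewrite muln2 -addnn addSn ltnS addnS ltnS leq_addr.
apply: ord_comp => //; exact: Hs.2.
Qed.

Lemma big_pair1 (K : fieldType) N (F : 'I_N -> pair_t K) k :
  (@fst (fps K) (fps K) (\big[@pair_add K/@Defs.pair_zero K]_(i < N) F i)) k = \sum_(i < N) (F i).1 k.
Proof.
elim: N F => [|N IH] F; first by rewrite !big_ord0.
by rewrite !big_ord_recl /= /fps_add IH.
Qed.

Lemma big_pair2 (K : fieldType) N (F : 'I_N -> pair_t K) k :
  (@snd (fps K) (fps K) (\big[@pair_add K/@Defs.pair_zero K]_(i < N) F i)) k = \sum_(i < N) (F i).2 k.
Proof.
elim: N F => [|N IH] F; first by rewrite !big_ord0.
by rewrite !big_ord_recl /= /fps_add IH.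
Qed.

Lemma sum_trunc (K : fieldType) (c : nat -> K) k N :
  (forall n, (k < n)%N -> c n = 0) -> (k < N)%N ->
  \sum_(n < N) c n = \sum_(n < k.+1) c n.
Proof.
move=> Hc hN; rewrite -(subnKC hN); elim: (N - k.+1)%N => [|d IH]; first by rewrite addn0.
rewrite addnS big_ord_recr /= IH Hc ?addr0 //; by rewrite ltnS leq_addr.
Qed.

Lemma cvg_unique (K : fieldType) (u : nat -> fps K) l l' :
  fps_cvg u l -> fps_cvg u l' -> l = l'.
Proof.
move=> H H'; apply: functional_extensionality => k.
have [N0 HN] := H k.+1; have [N1 HN1] := H' k.+1.
have e1 := HN (maxn N0 N1) (leq_maxl _ _) k (ltnSn k).
have e2 := HN1 (maxn N0 N1) (leq_maxr _ _) k (ltnSn k).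
rewrite /fps_add /fps_opp in e1 e2.
by rewrite (subr0_eq e1) (subr0_eq e2).
Qed.

Definition lim1 (K : fieldType) (p : pair_t K) (f : fps K) : fps K :=
  fun k => \sum_(n < k.+1) f n * (rpow p n).1 k.
Definition lim2 (K : fieldType) (p : pair_t K) (f : fps K) : fps K :=
  fun k => \sum_(n < k.+1) f n * (rpow p n).2 k.

Arguments lim1 {K}. Arguments lim2 {K}.
Arguments ord_rpow {K mup sp}.

Lemma cvg_lim (K : fieldType) (mup sp : fps K) (Hmu : inM mup) (Hs : inMplus sp) f :
  pair_cvg (phi_partial (mup, sp) f) (lim1 (mup, sp) f, lim2 (mup, sp) f).
Proof.
have [Z1 Z2] := (fun n => (ord_rpow Hmu Hs n).1, fun n => (ord_rpow Hmu Hs n).2).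
split=> n; exists n => N hN k hk; rewrite /fps_add /fps_opp /= /phi_partial.
- rewrite big_pair1 /lim1 (@sum_trunc _ (fun i => f i * (rpow (mup, sp) i).1 k) k N).
  + by rewrite subrr.
  + by move=> i hi; rewrite Z1 ?mulr0.
  + exact: leq_trans hk hN.
- rewrite big_pair2 /lim2 (@sum_trunc _ (fun i => f i * (rpow (mup, sp) i).2 k) k N).
  + by rewrite subrr.
  + by move=> i hi; rewrite Z2 ?mulr0 // ltnS ltnW.
  + exact: leq_trans hk hN.
Qed.

Arguments cvg_lim {K mup sp}.

Lemma mul1fps (K : fieldType) (g f : fps K) : (forall k, g k = fps1 K k) ->
  forall k, fps_mul g f k = f k.
Proof.
move=> Hg k; rewrite /fps_mul big_ord_recl /= Hg /fps1 /= mul1r subn0 big1 ?addr0 //.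
by move=> i _; rewrite Hg /fps1 /= mul0r.
Qed.

Lemma comp1 (K : fieldType) (s : fps K) k : fps_comp (fps1 K) s k = fps1 K k.
Proof.
rewrite /fps_comp big_ord_recl /= big1 ?addr0; first by rewrite /fps1 /= mul1r.
by move=> i _; rewrite /fps1 /= mul0r.
Qed.

Lemma exp1 (K : fieldType) (s : fps K) k : fps_exp s 1 k = s k.
Proof.
rewrite /fps_exp /= /fps_mul big_ord_recr /= subnn /fps1 /= mulr1 big1 ?add0r //.
move=> i _; have := ltn_ord i; rewrite -subn_gt0; case: (k - i)%N => //= *.
by rewrite mulr0.
Qed.

Lemma compX (K : fieldType) (s : fps K) k : s 0%N = 0 -> fps_comp (fpsX K) s k = s k.
Proof.
move=> s0; case: k => [|k].
  by rewrite /fps_comp big_ord_recl big_ord0 /fpsX /= mul0r addr0.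
rewrite /fps_comp big_ord_recl big_ord_recl /= big1.
  rewrite /fpsX /= mul0r mul1r add0r addr0; exact: exp1.
by move=> i _; rewrite /fpsX /= mul0r.
Qed.

Theorem mainTheorem10 (K : fieldType) (Hchar : [pchar K] =i pred0)
  (mup sp : fps K) (Hmu : inM mup) (Hs : inMplus sp) :
  (* the defining series of phi converges for every f *)
  (forall f : fps K, exists l, pair_cvg (phi_partial (mup, sp) f) l) /\
  (* and the map phi it defines has the stated properties *)
  (forall phi : fps K -> pair_t K,
     (forall f, pair_cvg (phi_partial (mup, sp) f) (phi f)) ->
     [/\ (forall f g, phi (fps_add f g) = pair_add (phi f) (phi g)),
         (forall (c : K) f, phi (fps_scale c f) = pair_scale c (phi f)),
         phi (fpsX K) = (mup, sp),
         (forall f, inM f -> inM (phi f).1 /\ inMplus (phi f).2) &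
         (forall f, const_term f = 1 -> inRiordan (phi f))]).
Proof.
have [Z1 Z2] := (fun n => (ord_rpow Hmu Hs n).1, fun n => (ord_rpow Hmu Hs n).2).
split; first by move=> f; eexists; exact: cvg_lim.
move=> phi Hphi.
have E f : phi f = (lim1 (mup, sp) f, lim2 (mup, sp) f).
  have [A1 A2] := Hphi f; have [B1 B2] := cvg_lim Hmu Hs f.
  rewrite (surjective_pairing (phi f)); congr pair; [exact: cvg_unique A1 B1 | exact: cvg_unique A2 B2].
have r1 : rpow (mup, sp) 1 = rtimes (fps1 K, fpsX K) (mup, sp) by [].
split.
- move=> f g; rewrite !E /pair_add /=; congr pair; apply: functional_extensionality => k;
  rewrite /lim1 /lim2 /fps_add -big_split /=; apply: eq_bigr => i _; by rewrite mulrDl.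
- move=> c f; rewrite !E /pair_scale /=; congr pair; apply: functional_extensionality => k;
  rewrite /lim1 /lim2 /fps_scale mulr_sumr; apply: eq_bigr => i _; by rewrite mulrA.
- rewrite E; congr pair; apply: functional_extensionality => k.
  + case: k => [|k].
      by rewrite /lim1 big_ord_recl big_ord0 /fpsX /= mul0r addr0 Hmu.
    rewrite /lim1 big_ord_recl big_ord_recl /= big1.
      rewrite /fpsX /= mul0r mul1r add0r addr0.
      by apply: mul1fps => j; rewrite comp1.
    by move=> i _; rewrite /fpsX /= mul0r.
  + case: k => [|k].
      by rewrite /lim2 big_ord_recl big_ord0 /fpsX /= mul0r addr0 Hs.1.
    rewrite /lim2 big_ord_recl big_ord_recl /= big1.
      rewrite /fpsX /= mul0r mul1r add0r addr0 /=.
      by rewrite compX // Hs.1.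
    by move=> i _; rewrite /fpsX /= mul0r.
- move=> f Hf; rewrite E /=.
  have f0 : f 0%N = 0 by apply: Hf.
  split; first by move=> [|k] // _; rewrite /lim1 big_ord_recl big_ord0 f0 mul0r addr0.
  have H2 : ord_ge (lim2 (mup, sp) f) 2.
    move=> [|[|k]] // _.
      by rewrite /lim2 big_ord_recl big_ord0 f0 mul0r addr0.
    rewrite /lim2 big_ord_recl big_ord_recl big_ord0 /= f0 mul0r add0r addr0.
    have z := Z2 1%N 1%N isT; simpl in z; by rewrite z mulr0.
  by split=> //; apply: ord_ge_le H2 _.
- move=> f Hf; rewrite /const_term in Hf; rewrite E /inRiordan /=; split.
  + exists (fun k => lim1 (mup, sp) f k - fps1 K k); split.
      move=> [|k] // _; rewrite /lim1 big_ord_recl big_ord0 Hf /= mul1r addr0.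
      by rewrite subrr.
    apply: functional_extensionality => k; rewrite /fps_add.
    by rewrite addrC subrK.
  + exists (fun k => lim2 (mup, sp) f k - fpsX K k); split.
      have H2 : ord_ge (fun k => lim2 (mup, sp) f k - fpsX K k) 2.
        move=> [|[|k]] // _.
          by rewrite /lim2 big_ord_recl big_ord0 Hf /= mul1r addr0 /fpsX /= subrr.
        rewrite /lim2 big_ord_recl big_ord_recl big_ord0 /= Hf mul1r addr0.
        have z := Z2 1%N 1%N isT; simpl in z; by rewrite z mulr0 // addr0 /fpsX /= subrr.
      by split=> //; apply: ord_ge_le H2 _.
    apply: functional_extensionality => k; rewrite /fps_add.
    by rewrite addrC subrK.
Qed.
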